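(* Let $\psi\in\mathcal W^-$, let $Y$ be a compact topological space, and let $f_k,f$ be continuous functions on $Y$ with $f_k\to f$ uniformly. Let $\mu_k,\mu$ be Borel measures on $Y$ of finite mass with $\mu_k\to\mu$ weakly. Then $\int_Y\psi(cf_k)\,d\mu_k\to\int_Y\psi(cf)\,d\mu$ for every $c\in[0,\infty)$, and $\|f_k\|_{\psi,\mu_k}\to\|f\|_{\psi,\mu}$.
   Context: $\mathcal W^-$: functions $\psi:[-\infty,\infty]\to[0,\infty]$, even, continuous on $\mathbb R$, $\psi(0)=0$, $\psi(\pm\infty)=\infty$, smooth, concave, strictly increasing on $(0,\infty)$. For a finite measure $\nu$ and measurable $g$, $\|g\|_{\psi,\nu}=\inf\{N>0:\int_Y\psi(g/N)\,d\nu\le1\}$. *)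

(* Defs.v *)
From HB Require Import structures.
From mathcomp Require Import all_boot all_order all_algebra.
From mathcomp Require Import all_classical all_reals all_analysis.
Set Implicit Arguments. Unset Strict Implicit. Unset Printing Implicit Defensive.
Import Order.TTheory GRing.Theory Num.Theory.
Import numFieldNormedType.Exports.
Local Open Scope classical_set_scope.
Local Open Scope ring_scope.

(* The class W^- : psi is even, continuous on R, psi 0 = 0, psi(+-oo) = +oo
   (encoded as psi x -> +oo when x -> +oo; the -oo side follows by evenness),
   nonnegative (codomain [0,oo]), smooth, concave and strictly increasing on
   (0,oo).  Since psi is finite on R it is a function R -> R. *)
Record Wminus (R : realType) (psi : R -> R) : Prop := {
  Wm_even : forall x, psi (- x) = psi x;
  Wm_cont : continuous psi;
  Wm_0 : psi 0 = 0;
  Wm_ge0 : forall x, 0 <= psi x;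
  Wm_infty : psi x @[x --> +oo] --> +oo;
  Wm_smooth : forall (n : nat) (x : R), 0 < x -> derivable (derive1n n psi) x 1;
  Wm_concave : forall x y t : R, 0 < x -> 0 < y -> 0 <= t <= 1 ->
     t * psi x + (1 - t) * psi y <= psi (t * x + (1 - t) * y);
  Wm_incr : forall x y : R, 0 < x -> x < y -> psi x < psi y }.

(* Orlicz (Luxemburg) functional
   ||g||_{psi,nu} = inf { N > 0 : \int psi(g/N) dnu <= 1 }, valued in \bar R
   (inf of the empty set is +oo). *)
Definition orlicz_norm (R : realType) (d : measure_display) (T : measurableType d)
  (psi : R -> R) (nu : {measure set T -> \bar R}) (g : T -> R) : \bar R :=
  ereal_inf [set N%:E | N in
    [set N : R | 0 < N /\ (\int[nu]_x (psi (g x / N))%:E <= 1)%E]].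

Definition borel (Y : ptopologicalType) := g_sigma_algebraType (@open Y).

(* Main.v *)
Require Import Defs.
From HB Require Import structures.
From mathcomp Require Import all_boot all_order all_algebra.
From mathcomp Require Import all_classical all_reals all_analysis.
From mathcomp Require Import measurable_realfun.
From mathcomp Require Import ring lra.
Set Implicit Arguments. Unset Strict Implicit. Unset Printing Implicit Defensive.
Import Order.TTheory GRing.Theory Num.Theory.
Import numFieldNormedType.Exports.
Local Open Scope classical_set_scope.
Local Open Scope ring_scope.
Lemma psi_abs (R : realType) (psi : R -> R) (hp : Wminus psi) (x : R) :
  psi `|x| = psi x.
Proof. by case: (ger0P x) => _ //; rewrite (Wm_even hp). Qed.

Lemma psi_le (R : realType) (psi : R -> R) (hp : Wminus psi) (x y : R) :
  0 <= x -> x <= y -> psi x <= psi y.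
Proof.
move=> x0; rewrite le_eqVlt => /orP[/eqP->//|xy].
move: x0; rewrite le_eqVlt => /orP[/eqP<-|x0].
  by rewrite (Wm_0 hp) (Wm_ge0 hp).
exact/ltW/(Wm_incr hp).
Qed.

Lemma psi_lt (R : realType) (psi : R -> R) (hp : Wminus psi) (x y : R) :
  0 <= x -> x < y -> psi x < psi y.
Proof.
move=> x0 xy; move: x0 xy; rewrite le_eqVlt => /orP[/eqP<-|x0] xy.
  rewrite (Wm_0 hp); apply: (le_lt_trans (Wm_ge0 hp (y/2))).
  by apply: (Wm_incr hp); [rewrite divr_gt0 | rewrite ltr_pdivrMr //; lra].
exact: (Wm_incr hp).
Qed.

Lemma psi_small (R : realType) (psi : R -> R) (hp : Wminus psi) (e : R) :
  0 < e -> exists2 d : R, 0 < d & forall u, `|u| < d -> psi u < e.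
Proof.
move=> e0.
have hc : psi x @[x --> (0:R)] --> psi 0 by apply: (Wm_cont hp).
have hn : \forall t \near (0:R), `|psi 0 - psi t| < e by exact: (cvgr_dist_lt _ _ hc).
have [d /= d0 H] := (nbhs_ballP _ _).1 hn.
exists d => // u ud.
have := H u; rewrite /ball /= sub0r normrN => /(_ ud).
by rewrite (Wm_0 hp) sub0r normrN ger0_norm ?(Wm_ge0 hp).
Qed.

Lemma cont_right_ge (R : realType) (f : R -> R) (a c : R) :
  continuous f -> (forall z, a < z -> c <= f z) -> c <= f a.
Proof.
move=> cf H; rewrite leNgt; apply/negP => fa.
have e0 : 0 < c - f a by rewrite subr_gt0.
have hc : f x @[x --> a] --> f a by apply: cf.
have hn : \forall t \near a, `|f a - f t| < c - f a by exact: (cvgr_dist_lt _ _ hc).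
have [d /= d0 Hd] := (nbhs_ballP _ _).1 hn.
have hz : a < a + d / 2 by rewrite ltrDl divr_gt0.
have := Hd (a + d/2); rewrite /ball /= opprD addrA subrr sub0r normrN.
rewrite ger0_norm ?divr_ge0 ?ltW // => /(_ _).
have hd2 : d / 2 < d by rewrite ltr_pdivrMr //; lra.
move=> /(_ hd2) h; have := H _ hz.
rewrite distrC in h; have := ler_norm (f (a + d/2) - f a). lra.
Qed.

Lemma psi_scale (R : realType) (psi : R -> R) (hp : Wminus psi) (t x : R) :
  0 < t <= 1 -> 0 <= x -> t * psi x <= psi (t * x).
Proof.
move=> /andP[t0 t1] x0.
move: x0; rewrite le_eqVlt => /orP[/eqP<-|x0].
  by rewrite (Wm_0 hp) !mulr0 (Wm_0 hp).
move: t1; rewrite le_eqVlt => /orP[/eqP->|t1]; first by rewrite !mul1r.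
apply: cont_right_ge; first exact: (Wm_cont hp).
move=> z zt.
have t10 : 0 < 1 - t by rewrite subr_gt0.
pose y := (z - t * x) / (1 - t).
have y0 : 0 < y by rewrite divr_gt0 // subr_gt0.
have := Wm_concave hp x0 y0 (t:=t).
rewrite ltW // ltW // => /(_ isT).
have -> : t * x + (1 - t) * y = z.
  by rewrite /y mulrCA divff ?mulr1 ?gt_eqF //; ring.
have := Wm_ge0 hp y.
have := mulr_ge0 (ltW t10) (Wm_ge0 hp y).
lra.
Qed.

Lemma psi_subadd (R : realType) (psi : R -> R) (hp : Wminus psi) (a b : R) :
  0 <= a -> 0 <= b -> psi (a + b) <= psi a + psi b.
Proof.
rewrite le_eqVlt => /orP[/eqP<-|a0]; first by rewrite add0r (Wm_0 hp) add0r.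
rewrite le_eqVlt => /orP[/eqP<-|b0]; first by rewrite addr0 (Wm_0 hp) addr0.
have ab0 : 0 < a + b by rewrite addr_gt0.
have h1 := psi_scale hp (t := a / (a + b)) (x := a + b).
have h2 := psi_scale hp (t := b / (a + b)) (x := a + b).
rewrite divr_gt0 // ler_pdivrMr // mul1r lerDl ltW // ltW // in h1.
rewrite divr_gt0 // ler_pdivrMr // mul1r lerDr ltW // ltW // in h2.
have h1' := h1 isT isT; have h2' := h2 isT isT.
rewrite divfK ?gt_eqF // in h1'.
rewrite divfK ?gt_eqF // in h2'.
have : a / (a + b) * psi (a + b) + b / (a + b) * psi (a + b) = psi (a + b).
  by rewrite -mulrDl -mulrDl divff ?gt_eqF // mul1r.
lra.
Qed.

Lemma psi_lip (R : realType) (psi : R -> R) (hp : Wminus psi) (s t : R) :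
  `|psi s - psi t| <= psi `|s - t|.
Proof.
rewrite -(psi_abs hp s) -(psi_abs hp t).
apply: (le_trans _ (psi_le hp (normr_ge0 _) (ler_dist_dist s t))).
move: (normr_ge0 s) (normr_ge0 t); move: `|s| `|t| => a b.
wlog st : a b / b <= a.
  move=> W a0 b0; case: (leP b a) => [/W|/ltW ts]; first exact.
  by rewrite distrC (distrC a); apply: W.
move=> a0 b0.
rewrite ger0_norm ?subr_ge0 // ?(ger0_norm (x := _ - _)) ?subr_ge0 ?psi_le //.
have := psi_subadd hp (a := b) (b := a - b).
rewrite (_ : b + (a - b) = a); last by ring.
move=> /(_ b0); rewrite subr_ge0 => /(_ st).
lra.
Qed.

Lemma cont_meas (R : realType) (Y : ptopologicalType) (g : Y -> R) :
  continuous g -> measurable_fun [set: borel Y] (g : borel Y -> R).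
Proof.
move=> cg; apply: (@measurability _ _ (borel Y) R setT g _ (measurable_realfun.RGenOpens.measurableE R)).
move=> _ [_ [a [b ->]] <-]; rewrite setTI.
apply: sub_sigma_algebra.
move/continuousP : cg; apply.
exact: interval_open.
Qed.

Lemma cont_bnd (R : realType) (Y : ptopologicalType) (g : Y -> R) :
  compact [set: Y] -> continuous g -> exists M : R, forall y, `|g y| <= M.
Proof.
move=> cY cg.
have : compact (g @` [set: Y]).
  by apply: continuous_compact => //; exact: continuous_subspaceT.
move=> /compact_bounded [M [_ HM]].
exists (`|M| + 1) => y; apply: HM; last by exists y.
by rewrite (le_lt_trans (ler_norm M)) // ltrDl.
Qed.

Definition Phi (R : realType) (Y : ptopologicalType) (psi : R -> R)
  (nu : {measure set (borel Y) -> \bar R}) (g : Y -> R) (c : R) : \bar R :=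
  (\int[nu]_x (psi (c * g x))%:E)%E.

Lemma cont_measE (R : realType) (Y : ptopologicalType) (g : Y -> R) :
  continuous g -> measurable_fun [set: borel Y] ((EFin \o g) : borel Y -> \bar R).
Proof. by move=> cg; apply/measurable_EFinP; exact: cont_meas. Qed.

Lemma cont_int (R : realType) (Y : ptopologicalType)
  (nu : {measure set (borel Y) -> \bar R}) (g : Y -> R) :
  compact [set: Y] -> continuous g -> (nu setT < +oo)%E ->
  nu.-integrable [set: borel Y] (fun x : borel Y => (g x)%:E).
Proof.
move=> cY cg nuf.
have [M HM] := cont_bnd cY cg.
apply: (measurable_bounded_integrable (f := g : borel Y -> R)) => //.
  exact: cont_meas.
exists M; split; first exact: num_real.
by move=> N MN y _; rewrite /= (le_trans (HM y)) // ltW.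
Qed.

Lemma psi_comp_cont (R : realType) (Y : ptopologicalType) (psi : R -> R)
  (hp : Wminus psi) (g : Y -> R) (c : R) :
  continuous g -> continuous (fun x => psi (c * g x)).
Proof.
move=> cg x; apply: continuous_comp; last exact: (Wm_cont hp).
by apply: cvgM; [exact: cvg_cst | exact: cg].
Qed.

Lemma psi_cabs (R : realType) (psi : R -> R) (hp : Wminus psi) (c u : R) :
  0 <= c -> psi (c * u) = psi (c * `|u|).
Proof. by move=> c0; rewrite -(psi_abs hp (c * u)) normrM ger0_norm. Qed.

Lemma Phi_ge0 (R : realType) (Y : ptopologicalType) (psi : R -> R)
  (hp : Wminus psi) (nu : {measure set (borel Y) -> \bar R}) (g : Y -> R) c :
  (0 <= Phi psi nu g c)%E.
Proof. by apply: integral_ge0 => x _; rewrite lee_fin (Wm_ge0 hp). Qed.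

Lemma Phi_fin (R : realType) (Y : ptopologicalType) (psi : R -> R)
  (hp : Wminus psi) (nu : {measure set (borel Y) -> \bar R}) (g : Y -> R) c :
  compact [set: Y] -> continuous g -> (nu setT < +oo)%E ->
  Phi psi nu g c \is a fin_num.
Proof.
move=> cY cg nuf; apply: integrable_fin_num => //.
exact: (cont_int cY (psi_comp_cont hp (c:=c) cg) nuf).
Qed.

Lemma Phi_mono (R : realType) (Y : ptopologicalType) (psi : R -> R)
  (hp : Wminus psi) (nu : {measure set (borel Y) -> \bar R}) (g : Y -> R) c c' :
  continuous g -> 0 <= c -> c <= c' -> (Phi psi nu g c <= Phi psi nu g c')%E.
Proof.
move=> cg c0 cc; apply: ge0_le_integral => //.
- by move=> x _; rewrite lee_fin (Wm_ge0 hp).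
- exact: (cont_measE (psi_comp_cont hp (c:=c) cg)).
- exact: (cont_measE (psi_comp_cont hp (c:=c') cg)).
move=> x _; rewrite lee_fin (psi_cabs hp _ c0) (psi_cabs hp _ (le_trans c0 cc)).
apply: (psi_le hp); first by rewrite mulr_ge0.
by rewrite ler_wpM2r.
Qed.

Lemma Phi_strict (R : realType) (Y : ptopologicalType) (psi : R -> R)
  (hp : Wminus psi) (nu : {measure set (borel Y) -> \bar R}) (g : Y -> R) c c' :
  compact [set: Y] -> continuous g -> (nu setT < +oo)%E ->
  0 < c -> c < c' -> (0 < Phi psi nu g c)%E ->
  (Phi psi nu g c < Phi psi nu g c')%E.
Proof.
move=> cY cg nuf c0 cc Pc.
rewrite ltNge; apply/negP => H.
have i1 := cont_int cY (psi_comp_cont hp (c:=c') cg) nuf.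
have i2 := cont_int cY (psi_comp_cont hp (c:=c) cg) nuf.
pose h x := psi (c' * g x) - psi (c * g x).
have hcont : continuous h.
  move=> x; apply: cvgB; [exact: (psi_comp_cont hp (c:=c') cg) | exact: (psi_comp_cont hp (c:=c) cg)].
have h0 x : 0 <= h x.
  rewrite /h subr_ge0 (psi_cabs hp _ (ltW c0)) (psi_cabs hp _ (ltW (lt_trans c0 cc))).
  by apply: (psi_le hp); [rewrite mulr_ge0 // ltW | rewrite ler_wpM2r // ltW].
have hB : (\int[nu]_x (h x)%:E = Phi psi nu g c' - Phi psi nu g c)%E.
  rewrite -integralB_EFin //; apply: eq_integral => x _; by rewrite /h EFinB.
have hI0 : (\int[nu]_x (h x)%:E = 0)%E.
  apply/eqP; rewrite eq_le; apply/andP; split; last first.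
    by apply: integral_ge0 => x _; rewrite lee_fin.
  rewrite hB sube_le0 //. 
have habs : (\int[nu]_x `|(h x)%:E| = 0)%E.
  rewrite -hI0; apply: eq_integral => x _; by rewrite gee0_abs // lee_fin.
have := (ae_eq_integral_abs nu measurableT (cont_measE hcont)).1 habs.
move=> hae.
have hae2 : ae_eq nu setT (fun x : borel Y => (psi (c * g x))%:E) (cst 0%E).
  apply: filterS hae => x /= hx Tx; move: (hx Tx) => /= /eqP; rewrite eqe => /eqP hx0.
  have [gx0|gxn0] := eqVneq (g x) 0; first by rewrite gx0 mulr0 (Wm_0 hp).
  exfalso; move: hx0; rewrite /h (psi_cabs hp _ (ltW c0)) (psi_cabs hp _ (ltW (lt_trans c0 cc))).
  move/eqP; rewrite subr_eq0 => /eqP/esym; apply/eqP; rewrite lt_eqF //.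
  apply: (psi_lt hp); first by rewrite mulr_ge0 // ltW.
  by rewrite ltr_pM2r // normr_gt0.
have : Phi psi nu g c = 0%E.
  rewrite /Phi (ge0_ae_eq_integral _ _ _ _ _ hae2) ?integral0 //.
  - exact: (cont_measE (psi_comp_cont hp (c:=c) cg)).
  - by move=> x _; rewrite lee_fin (Wm_ge0 hp).
move=> P0; by rewrite P0 ltxx in Pc.
Qed.

Lemma cvg_close (R : realType) (a b : nat -> \bar R) (L : R) :
  a k @[k --> \oo] --> L%:E -> (forall k, b k \is a fin_num) ->
  (forall k, a k \is a fin_num) ->
  (forall e : R, 0 < e -> \forall k \near \oo, (`|b k - a k| <= e%:E)%E) ->
  b k @[k --> \oo] --> L%:E.
Proof.
move=> ha bf af H; apply/fine_cvgP; split; first exact: nearW.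
have /fine_cvgP [_ ha'] := ha.
apply/cvgrPdist_le => e e0.
have e20 : 0 < e / 2 by rewrite divr_gt0.
have h1 := (cvgrPdist_le _ _).1 ha' _ e20.
near=> k.
have h2 : (`|b k - a k| <= (e/2)%:E)%E by near: k; exact: H.
have h3 : `|L - fine (a k)| <= e / 2 by near: k; exact: h1.
rewrite -(fineK (bf k)) -(fineK (af k)) -EFinB abse_EFin lee_fin in h2.
rewrite /=.
have := ler_normD (L - fine (a k)) (fine (a k) - fine (b k)).
rewrite addrA subrK distrC in h2 * => h4.
have : L - fine (b k) = L - fine (a k) + (fine (a k) - fine (b k)) by ring.
move=> h5.
rewrite (le_trans h4) // (splitr e) lerD //.
Unshelve. all: end_near.
Qed.

Lemma int_one (R : realType) (Y : ptopologicalType)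
  (nu : {measure set (borel Y) -> \bar R}) :
  (\int[nu]_x ((cst (1:R) x)%:E) = nu setT)%E.
Proof.
rewrite -[RHS]mul1e -integral_cst //.
Qed.

Lemma mass_bound (R : realType) (Y : ptopologicalType)
  (muk : nat -> {measure set (borel Y) -> \bar R})
  (mu : {measure set (borel Y) -> \bar R}) :
  (forall k, (muk k setT < +oo)%E) -> (mu setT < +oo)%E ->
  (forall g : Y -> R, continuous g ->
     (\int[muk k]_x (g x)%:E)%E @[k --> \oo] --> (\int[mu]_x (g x)%:E)%E) ->
  exists2 B : R, 0 < B & \forall k \near \oo, (muk k setT <= B%:E)%E.
Proof.
move=> mkf muf hw.
have mfin : mu setT \is a fin_num by rewrite ge0_fin_numE ?measure_ge0.
have hm : (muk k setT) @[k --> \oo] --> (fine (mu setT))%:E.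
  have hc1 : continuous (cst (1:R) : Y -> R) by move=> y; exact: cvg_cst.
  have := hw _ hc1; rewrite int_one fineK //.
  suff -> : (fun k => muk k setT) = (fun k => \int[muk k]_x ((cst (1:R) x)%:E))%E by [].
  by apply: funext => k; rewrite int_one.
have /fine_cvgP [_ hc] := hm.
have m0 : 0 <= fine (mu setT) by apply: fine_ge0; exact: measure_ge0.
exists (fine (mu setT) + 1); first by rewrite ltr_wpDl.
have H1 : \forall k \near \oo, `|fine (mu setT) - fine (muk k setT)| < 1.
  exact: (cvgr_dist_lt _ _ hc).
near=> k.
have hk : `|fine (mu setT) - fine (muk k setT)| < 1 by near: k; exact: H1.
have kfin : muk k setT \is a fin_num by rewrite ge0_fin_numE ?measure_ge0.
rewrite -(fineK kfin) lee_fin.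
rewrite distrC in hk; have := ler_norm (fine (muk k setT) - fine (mu setT)).
lra.
Unshelve. all: end_near.
Qed.

Lemma part1 (R : realType) (psi : R -> R) (Y : ptopologicalType)
  (fk : nat -> Y -> R) (f : Y -> R)
  (muk : nat -> {measure set (borel Y) -> \bar R})
  (mu : {measure set (borel Y) -> \bar R}) :
  Wminus psi ->
  compact [set: Y] ->
  (forall k, continuous (fk k)) ->
  continuous f ->
  (forall e : R, 0 < e -> \forall k \near \oo, forall y : Y, `|fk k y - f y| < e) ->
  (forall k, (muk k setT < +oo)%E) ->
  (mu setT < +oo)%E ->
  (forall g : Y -> R, continuous g ->
     (\int[muk k]_x (g x)%:E)%E @[k --> \oo] --> (\int[mu]_x (g x)%:E)%E) ->
  forall c : R, 0 <= c ->
     Phi psi (muk k) (fk k) c @[k --> \oo] --> Phi psi mu f c.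
Proof.
move=> hp cY cfk cf hunif mkf muf hw c c0.
have [B B0 HB] := mass_bound mkf muf hw.
have Lfin := Phi_fin hp c cY cf muf.
rewrite -(fineK Lfin).
apply: (@cvg_close _ (fun k => Phi psi (muk k) f c)).
- by rewrite fineK //; exact: (hw _ (psi_comp_cont hp (c:=c) cf)).
- by move=> k; exact: (Phi_fin hp c cY (cfk k) (mkf k)).
- by move=> k; exact: (Phi_fin hp c cY cf (mkf k)).
move=> e e0.
have [d d0 Hd] := psi_small hp (divr_gt0 e0 B0).
have c10 : 0 < c + 1 by rewrite ltr_wpDl.
have dd0 : 0 < d / (c + 1) by rewrite divr_gt0.
have Hu := hunif _ dd0.
near=> k.
have hk : forall y, `|fk k y - f y| < d / (c + 1) by near: k; exact: Hu.
have hb : (muk k setT <= B%:E)%E by near: k; exact: HB.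
pose h x := psi (c * fk k x) - psi (c * f x).
have hc : continuous h.
  move=> x; apply: cvgB; [exact: (psi_comp_cont hp (c:=c) (cfk k)) | exact: (psi_comp_cont hp (c:=c) cf)].
have hbd : forall x, `|h x| <= e / B.
  move=> x; apply: (le_trans (psi_lip hp _ _)); apply/ltW/Hd.
  rewrite -mulrBr normr_id normrM (ger0_norm c0).
  apply: (le_lt_trans (ler_wpM2l c0 (ltW (hk x)))).
  rewrite mulrCA gtr_pMr // ltr_pdivrMr // mul1r; lra.
rewrite /Phi -integralB_EFin //; first last.
  - exact: (cont_int cY (psi_comp_cont hp (c:=c) cf) (mkf k)).
  - exact: (cont_int cY (psi_comp_cont hp (c:=c) (cfk k)) (mkf k)).
have -> : (\int[muk k]_x ((psi (c * fk k x))%:E - (psi (c * f x))%:E))%E =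
   (\int[muk k]_x (h x)%:E)%E by apply: eq_integral => x _; rewrite EFinB.
apply: (le_trans (le_abse_integral _ _ (cont_measE hc))) => //.
apply: (le_trans (integral_le_bound (e / B)%:E _ _ _ _)) => //.
- exact: (cont_measE hc).
- by rewrite lee_fin divr_ge0 // ltW.
- by apply: aeW => x _; rewrite abse_EFin lee_fin.
apply: (le_trans (lee_pmul _ _ (lexx _) hb)) => //.
  by rewrite lee_fin divr_ge0 // ltW.
by rewrite -EFinM divfK ?gt_eqF.
Unshelve. all: end_near.
Qed.

Lemma orliczE (R : realType) (Y : ptopologicalType) (psi : R -> R)
  (nu : {measure set (borel Y) -> \bar R}) (g : Y -> R) :
  orlicz_norm psi nu g =
  ereal_inf [set N%:E | N in [set N : R | 0 < N /\ (Phi psi nu g N^-1 <= 1)%E]].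
Proof.
rewrite /orlicz_norm; congr ereal_inf; congr image; apply: funext => N.
rewrite /Phi; apply: propext; split => -[N0 H]; split => //;
  move: H; by under eq_integral => x _ do rewrite mulrC.
Qed.

Lemma norm_ge0 (R : realType) (Y : ptopologicalType) (psi : R -> R)
  (nu : {measure set (borel Y) -> \bar R}) (g : Y -> R) :
  (0 <= orlicz_norm psi nu g)%E.
Proof.
rewrite orliczE; apply: le_ereal_inf_tmp => _ [N [N0 _] <-].
by rewrite lee_fin ltW.
Qed.

Lemma norm_le (R : realType) (Y : ptopologicalType) (psi : R -> R)
  (nu : {measure set (borel Y) -> \bar R}) (g : Y -> R) (N : R) :
  0 < N -> (Phi psi nu g N^-1 <= 1)%E -> (orlicz_norm psi nu g <= N%:E)%E.
Proof.
move=> N0 H; rewrite orliczE; apply: ereal_inf_lbound; by exists N.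
Qed.

Lemma norm_ge (R : realType) (Y : ptopologicalType) (psi : R -> R)
  (hp : Wminus psi) (nu : {measure set (borel Y) -> \bar R}) (g : Y -> R) (N : R) :
  continuous g -> 0 < N -> (1 < Phi psi nu g N^-1)%E ->
  (N%:E <= orlicz_norm psi nu g)%E.
Proof.
move=> cg N0 H; rewrite orliczE; apply: le_ereal_inf_tmp => _ [N' [N'0 HN'] <-].
rewrite lee_fin leNgt; apply/negP => N'N.
have : (Phi psi nu g N^-1 <= Phi psi nu g N'^-1)%E.
  apply: (Phi_mono hp _ cg); first by rewrite invr_ge0 ltW.
  by rewrite lef_pV2 ?posrE // ltW.
move=> h; have := le_trans h HN'; rewrite leNgt H.
by [].
Qed.

Lemma norm_fin_ex (R : realType) (Y : ptopologicalType) (psi : R -> R)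
  (hp : Wminus psi) (nu : {measure set (borel Y) -> \bar R}) (g : Y -> R) :
  compact [set: Y] -> continuous g -> (nu setT < +oo)%E ->
  exists2 N : R, 0 < N & (Phi psi nu g N^-1 <= 1)%E.
Proof.
move=> cY cg nuf.
have [M HM] := cont_bnd cY cg.
have M0 : 0 <= M by apply: le_trans (HM point) ; exact: normr_ge0.
have mfin : nu setT \is a fin_num by rewrite ge0_fin_numE ?measure_ge0.
have m0 : 0 <= fine (nu setT) by apply: fine_ge0; exact: measure_ge0.
have m10 : 0 < fine (nu setT) + 1 by rewrite ltr_wpDl.
have mi0 : 0 < (fine (nu setT) + 1)^-1 by rewrite invr_gt0.
have [d d0 Hd] := psi_small hp mi0.
have N0 : 0 < (M + 1) / d by rewrite divr_gt0 // ltr_wpDl.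
exists ((M + 1) / d) => //.
have hbd : forall x, `|psi (((M + 1) / d)^-1 * g x)| <= (fine (nu setT) + 1)^-1.
  move=> x; apply/ltW; rewrite ger0_norm ?(Wm_ge0 hp) //; apply: Hd.
  rewrite normrM invf_div ger0_norm ?divr_ge0 ?ltW ?ltr_wpDl //.
  rewrite mulrAC ltr_pdivrMr ?ltr_wpDl // ltr_pM2l //.
  by rewrite (le_lt_trans (HM x)) // ltrDl.
set c := ((M + 1) / d)^-1.
have -> : Phi psi nu g c = (\int[nu]_x `|(psi (c * g x))%:E|)%E.
  by apply: eq_integral => x _; rewrite gee0_abs // lee_fin (Wm_ge0 hp).
apply: (le_trans (integral_le_bound ((fine (nu setT) + 1)^-1)%:E _ _ _ _)) => //.
- exact: (cont_measE (psi_comp_cont hp (c:=c) cg)).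

- by apply: aeW => x _; rewrite abse_EFin lee_fin.
rewrite -(fineK mfin) -EFinM lee_fin mulrC ler_pdivrMr // mul1r.
by rewrite lerDl.
Qed.

Lemma ev_lt (R : realType) (a : nat -> \bar R) (l x : R) :
  a k @[k --> \oo] --> l%:E -> l < x -> \forall k \near \oo, (a k < x%:E)%E.
Proof.
move=> /fine_cvgP [af ha] lx.
have e0 : 0 < x - l by rewrite subr_gt0.
have H1 : \forall k \near \oo, `|l - fine (a k)| < x - l by exact: (cvgr_dist_lt _ _ ha).
near=> k.
have hk : `|l - fine (a k)| < x - l by near: k; exact: H1.
have kf : a k \is a fin_num by near: k; exact: af.
rewrite -(fineK kf) lte_fin.
rewrite distrC in hk; have := ler_norm (fine (a k) - l); lra.
Unshelve. all: end_near.
Qed.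

Lemma ev_gt (R : realType) (a : nat -> \bar R) (l x : R) :
  a k @[k --> \oo] --> l%:E -> x < l -> \forall k \near \oo, (x%:E < a k)%E.
Proof.
move=> /fine_cvgP [af ha] lx.
have e0 : 0 < l - x by rewrite subr_gt0.
have H1 : \forall k \near \oo, `|l - fine (a k)| < l - x by exact: (cvgr_dist_lt _ _ ha).
near=> k.
have hk : `|l - fine (a k)| < l - x by near: k; exact: H1.
have kf : a k \is a fin_num by near: k; exact: af.
rewrite -(fineK kf) lte_fin.
have := ler_norm (l - fine (a k)); lra.
Unshelve. all: end_near.
Qed.

Lemma squeeze_e (R : realType) (u : nat -> \bar R) (r : R) :
  (forall k, (0 <= u k)%E) -> 0 <= r ->
  (forall e, 0 < e -> \forall k \near \oo, (u k <= (r + e)%:E)%E) ->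
  (forall e, 0 < e -> e < r -> \forall k \near \oo, ((r - e)%:E <= u k)%E) ->
  u k @[k --> \oo] --> r%:E.
Proof.
move=> u0 r0 Hup Hlo.
have Hf : \forall k \near \oo, u k \is a fin_num.
  near=> k.
  have hk : (u k <= (r + 1)%:E)%E by near: k; exact: Hup.
  by rewrite ge0_fin_numE // (le_lt_trans hk) // ltry.
apply/fine_cvgP; split => //.
apply/cvgrPdist_le => e e0.
have Hlo' : \forall k \near \oo, ((r - e)%:E <= u k)%E.
  have [er|re] := ltP e r; first exact: Hlo.
  apply: nearW => k; apply: le_trans (u0 k); rewrite lee_fin; lra.
near=> k.
have kf : u k \is a fin_num by near: k; exact: Hf.
have hk : (u k <= (r + e)%:E)%E by near: k; exact: Hup.
rewrite -(fineK kf) lee_fin in hk.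
have u0' : 0 <= fine (u k) by apply: fine_ge0.
have hl : r - e <= fine (u k).
  have hk2 : ((r - e)%:E <= u k)%E by near: k; exact: Hlo'.
  by rewrite -(fineK kf) lee_fin in hk2.
rewrite /= ler_norml; apply/andP; split; lra.
Unshelve. all: end_near.
Qed.

Unset Implicit Arguments.

Theorem lemma2p8 (R : realType) (psi : R -> R) (Y : ptopologicalType)
  (fk : nat -> Y -> R) (f : Y -> R)
  (muk : nat -> {measure set (borel Y) -> \bar R})
  (mu : {measure set (borel Y) -> \bar R}) :
  Wminus psi ->
  compact [set: Y] ->
  (forall k, continuous (fk k)) ->
  continuous f ->
  (* f_k -> f uniformly on Y *)
  (forall e : R, 0 < e -> \forall k \near \oo, forall y : Y, `|fk k y - f y| < e) ->
  (* finite mass *)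
  (forall k, (muk k setT < +oo)%E) ->
  (mu setT < +oo)%E ->
  (* weak convergence: against every (bounded) continuous function on Y *)
  (forall g : Y -> R, continuous g ->
     (\int[muk k]_x (g x)%:E)%E @[k --> \oo] --> (\int[mu]_x (g x)%:E)%E) ->
  (forall c : R, 0 <= c ->
     (\int[muk k]_x (psi (c * fk k x))%:E)%E @[k --> \oo]
       --> (\int[mu]_x (psi (c * f x))%:E)%E)
  /\ orlicz_norm psi (muk k) (fk k) @[k --> \oo] --> orlicz_norm psi mu f.
Proof.
move=> hp cY cfk cf hunif mkf muf hw.
have P1 := part1 hp cY cfk cf hunif mkf muf hw.
split; first by move=> c c0; exact: (P1 c c0).
have [N0 N00 HN0] := norm_fin_ex hp cY cf muf.
have nfin : orlicz_norm psi mu f \is a fin_num.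
  rewrite ge0_fin_numE ?norm_ge0 //.
  by apply: le_lt_trans (norm_le N00 HN0) _; rewrite ltry.
have r0 : 0 <= fine (orlicz_norm psi mu f) by apply: fine_ge0; exact: norm_ge0.
rewrite -(fineK nfin).
apply: squeeze_e => //.
- by move=> k; exact: norm_ge0.
- move=> e e0.
  set N := fine (orlicz_norm psi mu f) + e.
  have Npos : 0 < N by rewrite /N; lra.
  have : (orlicz_norm psi mu f < N%:E)%E by rewrite -(fineK nfin) lte_fin /N; lra.
  rewrite orliczE => /ereal_inf_lt [_ [N1 [N10 HN1] <-]].
  rewrite lte_fin => N1N.
  have hlt : (Phi psi mu f N^-1 < 1)%E.
    have := Phi_ge0 hp mu f N^-1; rewrite le_eqVlt => /orP[/eqP <-|Ppos].
      by rewrite lte01.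
    apply: lt_le_trans HN1; apply: (Phi_strict hp cY cf muf) => //.
      by rewrite invr_gt0.
    by rewrite ltf_pV2 ?posrE.
  have Pfin := Phi_fin hp N^-1 cY cf muf.
  have P1N := P1 N^-1 (ltW (eq_ind_r is_true Npos (invr_gt0 N))).
  rewrite -(fineK Pfin) in P1N.
  rewrite -(fineK Pfin) lte_fin in hlt.
  have := ev_lt P1N hlt.
  apply: filterS => k hk.
  by apply: norm_le => //; exact: ltW.
- move=> e e0 er.
  set N := fine (orlicz_norm psi mu f) - e.
  have Npos : 0 < N by rewrite /N; lra.
  have hgt : (1 < Phi psi mu f N^-1)%E.
    rewrite ltNge; apply/negP => H.
    have := norm_le Npos H; rewrite -(fineK nfin) lee_fin /N; lra.
  have Pfin := Phi_fin hp N^-1 cY cf muf.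
  have P1N := P1 N^-1 (ltW (eq_ind_r is_true Npos (invr_gt0 N))).
  rewrite -(fineK Pfin) in P1N.
  rewrite -(fineK Pfin) lte_fin in hgt.
  have := ev_gt P1N hgt.
  apply: filterS => k hk.
  exact: (norm_ge hp (cfk k) Npos hk).
Qed.
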